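(* Let $A,B\in\mathbb{R}_+^{n\times n}$ be two circulant matrices such that $\lambda(A)=\lambda(B)$ and $A\leq B$ (entrywise). Then $\mathrm{Attr}(A)\subseteq\mathrm{Attr}(B)$.
   Context: Max algebra: on $\mathbb{R}_+=[0,\infty)$ use $a\oplus b=\max(a,b)$ and ordinary multiplication; for nonnegative matrices $(A\otimes B)_{i,k}=\max_j A_{i,j}B_{j,k}$, and $A^t$ denotes the $t$-th max-algebraic power. A value $\lambda\in\mathbb{R}_+$ is a (max-algebraic) eigenvalue of $A\in\mathbb{R}_+^{n\times n}$ if $A\otimes x=\lambda x$ for some nonzero $x\in\mathbb{R}_+^n$; $\lambda(A)$ denotes the greatest eigenvalue, which equals the maximum cycle geometric mean $\max_{k=1}^n\max_{i_1,\dots,i_k}(A_{i_1,i_2}A_{i_2,i_3}\cdots A_{i_k,i_1})^{1/k}$. The eigencone is $V(A,\lambda)=\{x\in\mathbb{R}_+^n: A\otimes x=\lambda x\}$, and the attraction cone is $\mathrm{Attr}(A)=\{x\in\mathbb{R}_+^n:\ A^t\otimes x\in V(A,\lambda(A))\text{ for some }t\ge 0\}$ (with $A^0=I$). A matrix $A\in\mathbb{R}_+^{n\times n}$ is circulant, written $A=\mathrm{Circ}(a_0,\dots,a_{n-1})$, if $A_{i,j}=a_t$ whenever $t\in\{0,\dots,n-1\}$ and $t\equiv j-i \pmod n$. *)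

(* Defs.v *)
From mathcomp Require Import all_boot.
From Stdlib Require Import Reals.
Set Implicit Arguments. Unset Strict Implicit. Unset Printing Implicit Defensive.

Definition mat (n : nat) := 'I_n -> 'I_n -> R.
Definition vec (n : nat) := 'I_n -> R.

Definition nonneg_mat n (A : mat n) : Prop := forall i j, Rle 0 (A i j).
Definition nonneg_vec n (x : vec n) : Prop := forall i, Rle 0 (x i).

(* max-algebraic product (A (x) B)_{ik} = max_j A_{ij} B_{jk}; all entries
   considered are nonnegative, so 0 is a neutral element for max here. *)
Definition mp_mul n (A B : mat n) : mat n :=
  fun i k => \big[Rmax/0%R]_(j < n) Rmult (A i j) (B j k).
Definition mp_app n (A : mat n) (x : vec n) : vec n :=
  fun i => \big[Rmax/0%R]_(j < n) Rmult (A i j) (x j).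
Definition mp_id n : mat n := fun i j => if i == j then 1%R else 0%R.
Definition mp_pow n (A : mat n) (t : nat) : mat n := ssrnat.iter t (mp_mul A) (@mp_id n).

Definition is_eigenvalue n (A : mat n) (lam : R) : Prop :=
  Rle 0 lam /\
  exists x : vec n, nonneg_vec x /\ (exists i, x i <> 0%R) /\
    forall i, mp_app A x i = Rmult lam (x i).

Definition is_greatest_eigenvalue n (A : mat n) (lam : R) : Prop :=
  is_eigenvalue A lam /\ forall mu, is_eigenvalue A mu -> Rle mu lam.

Definition in_eigencone n (A : mat n) (lam : R) (x : vec n) : Prop :=
  nonneg_vec x /\ forall i, mp_app A x i = Rmult lam (x i).

(* attraction cone, w.r.t. the greatest eigenvalue lam = lambda(A) *)
Definition in_attr n (A : mat n) (lam : R) (x : vec n) : Prop :=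
  nonneg_vec x /\ exists t : nat, in_eigencone A lam (mp_app (mp_pow A t) x).

Definition circulant n (A : mat n) : Prop :=
  exists a : nat -> R, forall i j : 'I_n, A i j = a (((j + n) - i) %% n)%N.

(* Main.v *)
Require Import Defs.
From mathcomp Require Import all_boot.
From Stdlib Require Import Reals.
From Stdlib Require Import Lra FunctionalExtensionality.
From mathcomp Require Import ssrnat.
Open Scope R_scope.
Set Warnings "-notation-overridden".
Lemma L1 (n:nat) (F : 'I_n -> R) j : F j <= \big[Rmax/0]_(k < n) F k.
Proof.
have : j \in index_enum 'I_n by rewrite mem_index_enum.
elim: (index_enum 'I_n) => // a r IH.
rewrite inE big_cons /=; case/orP => [/eqP ->|/IH H]; [apply Rmax_l|].
eapply Rle_trans; [exact H| apply Rmax_r].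
Qed.
Lemma L2 (n:nat) (F : 'I_n -> R) D : 0 <= D -> (forall k, F k <= D) -> \big[Rmax/0]_(k < n) F k <= D.
Proof. move=> D0 H; apply big_ind => // x y Hx Hy; by apply Rmax_lub. Qed.
Lemma L3 (n:nat) (F : 'I_n -> R) : 0 <= \big[Rmax/0]_(k < n) F k.
Proof. apply big_rec; first lra. move=> i x _ Hx; eapply Rle_trans; [exact Hx|apply Rmax_r]. Qed.
Lemma L4 (n:nat) (F : 'I_n -> R) : \big[Rmax/0]_(k < n) F k = 0 \/ exists k, \big[Rmax/0]_(k < n) F k = F k.
Proof.
apply (big_rec (fun z => z = 0 \/ exists k, z = F k)); first by left.
move=> i x _ Hx; apply Rmax_case; [by right; exists i| exact Hx].
Qed.
Lemma Lscale (n:nat) (F : 'I_n -> R) c : 0 <= c -> c * \big[Rmax/0]_(k < n) F k = \big[Rmax/0]_(k < n) (c * F k).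
Proof.
move=> c0; apply (big_ind2 (fun a b => c * a = b)); first by rewrite Rmult_0_r.
  by move=> x1 x2 y1 y2 <- <-; rewrite RmaxRmult.
by [].
Qed.

Definition sh (n s : nat) (i : 'I_n.+1) : 'I_n.+1 := inord ((i + s) %% n.+1).
Lemma sh_val n s i : (sh n s i : nat) = ((i + s) %% n.+1)%N.
Proof. by rewrite /sh inordK // ltn_pmod. Qed.
Lemma sh_comp n a b i : sh n a (sh n b i) = sh n (b + a) i.
Proof. apply: val_inj; by rewrite /= !sh_val modnDml addnA. Qed.
Lemma sh_id n s i : (s %% n.+1 = 0)%N -> sh n s i = i.
Proof. move=> H; apply: val_inj; by rewrite /= sh_val -modnDmr H addn0 modn_small. Qed.
Lemma sh_inv n s j : sh n s (sh n (n.+1 - s %% n.+1) j) = j.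
Proof.
rewrite sh_comp sh_id // -modnDmr subnK ?modnn //.
by apply: ltnW; rewrite ltn_pmod.
Qed.
Lemma sh_ord0 n (i : 'I_n.+1) : sh n i ord0 = i.
Proof. apply: val_inj; by rewrite /= sh_val add0n modn_small. Qed.
Lemma sh_C n a b i : sh n a (sh n b i) = sh n b (sh n a i).
Proof. by rewrite !sh_comp addnC. Qed.

Lemma modeq N i j s : (0 < N)%N -> (i < N)%N -> (((j+s) %% N + N - (i+s) %% N) %% N = (j + N - i) %% N)%N.
Proof.
move=> N0 iN.
apply/eqP; rewrite -(eqn_modDr (i+s)) -modnDmr subnK; last first.
  by apply: leq_trans (ltnW (ltn_pmod _ N0)) (leq_addl _ _).
rewrite modnDr addnA subnK; last by apply: leq_trans (ltnW iN) (leq_addl _ _).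
by rewrite modn_mod -addnA (addnC N) addnA modnDr.
Qed.

Lemma circ_shift n (C : mat n.+1) s i j : circulant C -> C (sh n s i) (sh n s j) = C i j.
Proof.
case=> a Ha; rewrite !Ha !sh_val.
have E : forall x y : nat, Nat.add x y = addn x y by [].
have E2 : forall x y : nat, Nat.sub x y = subn x y by [].
rewrite ?E ?E2. by rewrite modeq // ltn_ord.
Qed.
Arguments L1 {n}. Arguments L2 {n}. Arguments L3 {n}. Arguments L4 {n}. Arguments Lscale {n}.
Arguments circ_shift {n C}.
Arguments sh_ord0 {n}. Arguments sh_inv {n}. Arguments sh_comp {n}. Arguments sh_id {n}. Arguments sh_C {n}. Arguments sh_val {n}.

Lemma app_ge0 n (A : mat n) x i : 0 <= mp_app A x i.
Proof. exact: L3. Qed.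

Lemma app_id n (x : vec n) : nonneg_vec x -> mp_app (@mp_id n) x = x.
Proof.
move=> hx; apply: functional_extensionality => i; apply: Rle_antisym.
  apply: L2 => // k; rewrite /mp_id; case: eqP => [->|_]; have := hx i; lra.
by have := L1 (fun j => mp_id i j * x j) i; rewrite /mp_id eqxx Rmult_1_l.
Qed.

Lemma app_mul n (A X : mat n) x i : nonneg_mat A -> nonneg_mat X -> nonneg_vec x ->
  mp_app (mp_mul A X) x i = mp_app A (mp_app X x) i.
Proof.
move=> hA hX hx; rewrite /mp_app /mp_mul; apply: Rle_antisym.
  apply: L2; first exact: L3.
  move=> j; rewrite Rmult_comm Lscale //; apply: L2; first exact: L3.
  move=> k; eapply Rle_trans; last exact: (L1 (fun k => A i k * _) k).
  rewrite /= -Rmult_assoc (Rmult_comm (x j)) Rmult_assoc.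
  apply: Rmult_le_compat_l => //.
  rewrite Rmult_comm; exact: (L1 (fun j => X k j * x j) j).
apply: L2; first exact: L3.
move=> k; rewrite Lscale //; apply: L2; first exact: L3.
move=> j; eapply Rle_trans; last exact: (L1 (fun j => _ * x j) j).
rewrite /= -Rmult_assoc; apply: Rmult_le_compat_r => //.
exact: (L1 (fun k => A i k * X k j) k).
Qed.

Lemma mul_nonneg n (A X : mat n) : nonneg_mat (mp_mul A X).
Proof. move=> i j; exact: L3. Qed.

Lemma id_nonneg n : nonneg_mat (@mp_id n).
Proof. move=> i j; rewrite /mp_id; case: eqP => _; lra. Qed.

Lemma pow_iter n (A : mat n) x t : nonneg_mat A -> nonneg_vec x ->
  mp_app (mp_pow A t) x = iter t (mp_app A) x.
Proof.
move=> hA hx; elim: t => [|t IH] /=; first exact: app_id.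
rewrite -IH; apply: functional_extensionality => i.
apply: app_mul => //.
case: t {IH} => [|t] /=; [exact: id_nonneg| exact: mul_nonneg].
Qed.

Lemma app_mono n (A A' : mat n) x x' i : nonneg_mat A -> (forall i j, A i j <= A' i j) ->
  nonneg_vec x -> (forall j, x j <= x' j) -> mp_app A x i <= mp_app A' x' i.
Proof.
move=> hA hAA hx hxx; apply: L2; first exact: L3.
move=> k; eapply Rle_trans; last exact: (L1 (fun k => A' i k * x' k) k).
apply: Rmult_le_compat; auto.
Qed.

Lemma app_scale n (A : mat n) v c i : 0 <= c ->
  mp_app A (fun j => c * v j) i = c * mp_app A v i.
Proof.
move=> c0; rewrite /mp_app Lscale //; congr (\big[_/_]_(_ < _) _); apply: functional_extensionality => k.
ring.
Qed.

Lemma app_shift n (A : mat n.+1) v s i : circulant A ->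
  mp_app A (fun j => v (sh n s j)) i = mp_app A v (sh n s i).
Proof.
move=> hC; rewrite /mp_app; apply: Rle_antisym.
  apply: L2; first exact: L3.
  move=> k; rewrite -(circ_shift s i k hC).
  exact: (L1 (fun k => A (sh n s i) k * v k) (sh n s k)).
apply: L2; first exact: L3.
move=> k; set k' := sh n (n.+1 - s %% n.+1) k.
have <- : sh n s k' = k by rewrite sh_inv.
rewrite circ_shift //.
exact: (L1 (fun k => A i k * v (sh n s k)) k').
Qed.

Definition rleb (a b : R) : bool := if Rle_dec a b then true else false.
Lemma rlebP a b : reflect (a <= b) (rleb a b).
Proof. rewrite /rleb; case: Rle_dec => h; by constructor. Qed.

Lemma app_incr n (M : mat n) v i : (forall i, 1 <= M i i) -> nonneg_vec v -> v i <= mp_app M v i.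
Proof.
move=> hd hv; eapply Rle_trans; last exact: (L1 (fun j => M i j * v j) i).
have := hd i; have := hv i; simpl; nra.
Qed.

Lemma iter_nonneg n (M : mat n) x m : nonneg_vec x -> nonneg_vec (iter m (mp_app M) x).
Proof. by case: m => [|m] //= hx i; exact: app_ge0. Qed.

Lemma stab n (M : mat n) x : nonneg_mat M -> (forall i j, M i j <= 1) -> (forall i, 1 <= M i i) ->
  nonneg_vec x -> forall i, iter n.+1 (mp_app M) x i = iter n (mp_app M) x i.
Proof.
move=> hM h1 hd hx.
set w := fun m => iter m (mp_app M) x.
have wS : forall m, w m.+1 = mp_app M (w m) by [].
have wpos : forall m, nonneg_vec (w m) by move=> m; exact: iter_nonneg.
have winc : forall m i, w m i <= w m.+1 i by move=> m i; rewrite wS; exact: app_incr.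
have key : forall m i, w m i < w m.+1 i -> (m <= #|[set k | rleb (w m.+1 i) (w m k)]|)%N.
  elim=> [//|m IH] i lt.
  have [E|[j E]] := L4 (fun j => M i j * w m.+1 j).
    have E0 : w m.+2 i = 0 by rewrite wS /mp_app E.
    have := wpos m.+1 i; lra.
  have Ej : w m.+2 i = M i j * w m.+1 j by rewrite wS /mp_app E.
  case: (Rle_dec (w m.+1 j) (w m j)) => hj.
    exfalso.
    have : M i j * w m.+1 j <= w m.+1 i.
      eapply Rle_trans; first apply: Rmult_le_compat_l; [exact: hM| exact: hj|].
      rewrite wS; exact: (L1 (fun j => M i j * w m j) j).
    lra.
  have hj' : w m j < w m.+1 j by lra.
  have IHj := IH j hj'.
  have jn : j \notin [set k | rleb (w m.+1 j) (w m k)].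
    rewrite inE; apply/rlebP; lra.
  have le1 : (w m.+2 i <= w m.+1 j).
    rewrite Ej; have := h1 i j; have := hM i j; have := wpos m.+1 j; nra.
  apply: (leq_trans _ (subset_leq_card (_ : j |: [set k | rleb (w m.+1 j) (w m k)] \subset _))).
    by rewrite cardsU1 jn add1n ltnS.
  apply/subsetP => k; rewrite !inE; case/orP => [/eqP ->|/rlebP hk]; apply/rlebP => //.
  have := winc m k; lra.
move=> i; apply: Rle_antisym; last exact: winc.
case: (Rle_dec (w n.+1 i) (w n i)) => // hlt; exfalso.
have hlt' : w n i < w n.+1 i by lra.
have := key n i hlt'.
have inot : i \notin [set k | rleb (w n.+1 i) (w n k)] by rewrite inE; apply/rlebP; lra.
have := max_card (i |: [set k | rleb (w n.+1 i) (w n k)]).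
rewrite cardsU1 inot card_ord add1n => H1 H2.
by have := leq_ltn_trans H2 H1; rewrite ltnn.
Qed.
Arguments stab {n M x}.

Lemma rowmax_eq n (C : mat n.+1) i : circulant C ->
  mp_app C (fun _ => 1) i = \big[Rmax/0]_(j < n.+1) C ord0 j.
Proof.
move=> hC; apply: Rle_antisym.
  apply: L2; first exact: L3.
  move=> j; rewrite Rmult_1_r.
  rewrite -{1}(sh_ord0 i) -{1}(sh_inv i j) circ_shift //.
  exact: (L1 (fun j => C ord0 j) _).
apply: L2; first exact: L3.
move=> j; rewrite -(circ_shift i) // sh_ord0 -(Rmult_1_r (C i _)).
exact: (L1 (fun j => C i j * 1) _).
Qed.

Arguments rowmax_eq {n C}.

Lemma entries_le n (C : mat n.+1) lam : circulant C -> is_greatest_eigenvalue C lam ->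
  forall i j, C i j <= lam.
Proof.
move=> hC [_ hg] i j.
have hr : is_eigenvalue C (\big[Rmax/0]_(j < n.+1) C ord0 j).
  split; first exact: L3.
  exists (fun _ => 1); split; first by move=> k; lra.
  split; first by exists ord0; lra.
  by move=> k; rewrite rowmax_eq // Rmult_1_r.
apply: Rle_trans (hg _ hr).
rewrite -(rowmax_eq i hC) -(Rmult_1_r (C i j)).
exact: (L1 (fun j => C i j * 1) _).
Qed.

Lemma lam_le_row n (C : mat n.+1) lam : circulant C -> nonneg_mat C -> is_eigenvalue C lam ->
  lam <= \big[Rmax/0]_(j < n.+1) C ord0 j.
Proof.
move=> hC hCp [l0 [x [hx [[k hk] he]]]].
set r := \big[Rmax/0]_(j < n.+1) C ord0 j.
have xk : 0 < x k by have := hx k; lra.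
have [E|[i0 E]] := L4 x.
  have := L1 x k; lra.
have xle : forall j, x j <= x i0 by move=> j; rewrite -E; exact: L1.
have xi0 : 0 < x i0 by have := xle k; lra.
have Cle : forall j, C i0 j <= r.
  move=> j; rewrite /r -(rowmax_eq i0 hC) -(Rmult_1_r (C i0 j)).
  exact: (L1 (fun j => C i0 j * 1) _).
have : lam * x i0 <= r * x i0.
  rewrite -he; apply: L2.
    apply: Rmult_le_pos; [exact: L3| lra].
  move=> j; apply: Rmult_le_compat; [exact: hCp|exact: hx|exact: Cle|exact: xle].
move=> H; apply: (Rmult_le_reg_r (x i0)) => //.
Qed.

Lemma iter_decomp n (C M : mat n.+1) lam t x : circulant C -> 0 <= lam ->
  (forall v i, mp_app C v i = lam * mp_app M v (sh n t i)) ->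
  forall m i, iter m (mp_app C) x i = lam ^ m * iter m (mp_app M) x (sh n (m * t) i).
Proof.
move=> hC l0 hd; elim=> [|m IH] i /=.
  rewrite mul0n sh_id //=; ring.
have -> : iter m (mp_app C) x = fun j => lam ^ m * iter m (mp_app M) x (sh n (m * t) j).
  by apply: functional_extensionality => j; rewrite IH.
rewrite app_scale; last exact: pow_le.
rewrite app_shift // hd sh_comp mulSnr; ring.
Qed.
Arguments entries_le {n C lam}. Arguments lam_le_row {n C lam}. Arguments iter_decomp {n C M lam t}.

Definition Mof n (C : mat n.+1) lam tau : mat n.+1 := fun i j => / lam * C (sh n tau i) j.
Arguments Mof {n}.

Lemma Mof_app n (C : mat n.+1) lam tau v i : 0 < lam ->
  mp_app (Mof C lam tau) v i = / lam * mp_app C v (sh n tau i).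
Proof.
move=> l0; rewrite /mp_app Lscale; last by apply: Rlt_le; apply: Rinv_0_lt_compat.
congr (\big[_/_]_(_ < _) _); apply: functional_extensionality => k; rewrite /Mof; ring.
Qed.

Lemma Mof_dec n (C : mat n.+1) lam t v i : 0 < lam ->
  mp_app C v i = lam * mp_app (Mof C lam (n.+1 - t %% n.+1)) v (sh n t i).
Proof.
move=> l0; rewrite Mof_app // sh_C sh_inv; field; lra.
Qed.

Arguments Mof_dec {n} C {lam}.

Lemma iter_mono n (M : mat n) p v v' : nonneg_mat M -> nonneg_vec v -> (forall j, v j <= v' j) ->
  forall i, iter p (mp_app M) v i <= iter p (mp_app M) v' i.
Proof.
move=> hM hv hvv; elim: p => [|p IH] i //=.
apply: app_mono => //; [by move=> *; apply: Rle_refl| exact: iter_nonneg].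
Qed.

Lemma iter_monoM n (M M' : mat n) p v : nonneg_mat M -> (forall i j, M i j <= M' i j) -> nonneg_vec v ->
  forall i, iter p (mp_app M) v i <= iter p (mp_app M') v i.
Proof.
move=> hM hMM hv; elim: p => [|p IH] i /=; first exact: Rle_refl.
apply: app_mono => //; exact: iter_nonneg.
Qed.

Arguments iter_mono {n M} p {v v'}. Arguments iter_monoM {n M M'} p {v}.

Lemma iter_incr n (M : mat n) p v : (forall i, 1 <= M i i) -> nonneg_vec v ->
  forall i, v i <= iter p (mp_app M) v i.
Proof.
move=> hd hv; elim: p => [|p IH] i /=; first exact: Rle_refl.
apply: Rle_trans (IH i) _; apply: app_incr => //; exact: iter_nonneg.
Qed.

Lemma stab_all n (M : mat n) x : nonneg_mat M -> (forall i j, M i j <= 1) -> (forall i, 1 <= M i i) ->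
  nonneg_vec x -> forall p i, iter (n + p) (mp_app M) x i = iter n (mp_app M) x i.
Proof.
move=> hM h1 hd hx; elim=> [|p IH] i; first by rewrite addn0.
rewrite addnS iterS.
have -> : iter (n + p) (mp_app M) x = iter n (mp_app M) x.
  by apply: functional_extensionality => j; rewrite IH.
exact: (stab hM h1 hd hx i).
Qed.

Arguments stab_all {n M x}.

Theorem theorem3 (n : nat) (A B : mat n) (lam : R) :
  nonneg_mat A -> nonneg_mat B ->
  circulant A -> circulant B ->
  is_greatest_eigenvalue A lam -> is_greatest_eigenvalue B lam ->
  (forall i j, Rle (A i j) (B i j)) ->
  forall x : vec n, in_attr A lam x -> in_attr B lam x.
Proof.
move=> hA hB cA cB gA gB hAB x [hx [k [hyp hy]]].
split => //.
case: n A B hA hB cA cB gA gB hAB x hx hyp hy => [|n] A B hA hB cA cB gA gB hAB x hx hyp hy.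
  by exists 0%N; split; case.
have l0 : 0 <= lam by case: gA => [[]].
have Ble := entries_le cB gB.
have [lz|lp] : lam = 0 \/ 0 < lam by lra.
  exists 0%N; rewrite /= app_id //; split => // i.
  rewrite lz Rmult_0_l; apply: Rle_antisym; last exact: L3.
  apply: L2; first lra.
  move=> j; have := Ble i j; have := hB i j; have := hx j; rewrite lz; nra.
set r := \big[Rmax/0]_(j < n.+1) A ord0 j.
have rl : r = lam.
  apply: Rle_antisym.
    have := entries_le cA gA ord0; rewrite /r => H; apply: L2 => //.
  exact: lam_le_row cA hA (proj1 gA).
have [E|[t0 Et0]] := L4 (fun j => A ord0 j).
  rewrite -/r in E; lra.
rewrite -/r rl in Et0.
have dA : forall i, A i (sh n t0 i) = lam.
  move=> i; rewrite Et0 -(circ_shift i ord0 t0) //; have -> : sh n i ord0 = i by exact: sh_ord0.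
  congr (A i _).
  by apply: val_inj; rewrite /= !sh_val addnC.
have dB : forall i, B i (sh n t0 i) = lam.
  move=> i; apply: Rle_antisym; first exact: Ble.
  rewrite -(dA i); exact: hAB.
set tau := (n.+1 - t0 %% n.+1)%N.
set MA := Mof A lam tau. set MB := Mof B lam tau.
have linv : 0 < / lam by apply: Rinv_0_lt_compat.
have MBp : nonneg_mat MB by move=> i j; rewrite /MB /Mof; have := hB (sh n tau i) j; nra.
have MAp : nonneg_mat MA by move=> i j; rewrite /MA /Mof; have := hA (sh n tau i) j; nra.
have MAB : forall i j, MA i j <= MB i j.
  move=> i j; rewrite /MA /MB /Mof; apply: Rmult_le_compat_l; [lra| exact: hAB].
have MB1 : forall i j, MB i j <= 1.
  move=> i j; rewrite /MB /Mof; have := Ble (sh n tau i) j.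
  move=> H; rewrite -(Rinv_l lam); last lra.
  apply: Rmult_le_compat_l => //; lra.
have diagA : forall i, A (sh n tau i) i = lam.
  by move=> i; rewrite -{2}(sh_inv t0 i) dA.
have diagB : forall i, B (sh n tau i) i = lam.
  by move=> i; rewrite -{2}(sh_inv t0 i) dB.
have MAd : forall i, 1 <= MA i i.
  by move=> i; rewrite /MA /Mof diagA Rinv_l; lra.
have MBd : forall i, 1 <= MB i i.
  by move=> i; rewrite /MB /Mof diagB Rinv_l; lra.
have decA := fun v i => Mof_dec A t0 v i lp.
have decB := fun v i => Mof_dec B t0 v i lp.
have itA := iter_decomp x cA l0 decA.
have itB := iter_decomp x cB l0 decB.
set y := iter k (mp_app A) x.
have hy' : forall i, mp_app A y i = lam * y i by move=> i; have := hy i; rewrite pow_iter.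
have ystep : forall i, y (sh n t0 i) <= y i.
  move=> i; apply: (Rmult_le_reg_l lam) => //; rewrite -(hy' i) -{1}(dA i).
  exact: (L1 (fun j => A i j * y j) _).
have ym : forall m i, y (sh n (m * t0) i) <= y i.
  elim=> [|m IH] i; first by rewrite mul0n sh_id //; apply: Rle_refl.
  rewrite mulSnr -sh_comp; apply: Rle_trans (IH i); exact: ystep.
have yinv : forall i, y (sh n t0 i) = y i.
  move=> i; apply: Rle_antisym; first exact: ystep.
  have := ym n (sh n t0 i); rewrite sh_comp -mulSn sh_id //.
  by rewrite modnMr.
set w := iter k (mp_app MA) x.
have winv : forall j, w (sh n t0 j) = w j.
  move=> j; set i := sh n (n.+1 - (k * t0) %% n.+1) j.
  have hij : sh n (k * t0) i = j by rewrite sh_inv.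
  have := yinv i; rewrite /y !itA sh_C hij.
  have : 0 < lam ^ k by apply: pow_lt.
  move=> H1 H2; apply: (Rmult_eq_reg_l (lam ^ k)) => //; lra.
have MBsh : forall v s i, mp_app MB (fun j => v (sh n s j)) i = mp_app MB v (sh n s i).
  move=> v s i; rewrite /MB !Mof_app // app_shift // sh_C //.
have itsh : forall p v s i, iter p (mp_app MB) (fun j => v (sh n s j)) i = iter p (mp_app MB) v (sh n s i).
  elim=> [|p IH] v s i //=.
  have -> : iter p (mp_app MB) (fun j => v (sh n s j)) = fun j => iter p (mp_app MB) v (sh n s j).
    by apply: functional_extensionality => j; rewrite IH.
  by rewrite MBsh.
set W := iter n.+1 (mp_app MB) x.
have wpos : nonneg_vec w by exact: iter_nonneg.
have Wd : forall i, W i = iter n.+1 (mp_app MB) w i.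
  move=> i; apply: Rle_antisym.
    apply: iter_mono => //; move=> j; exact: (iter_incr _ _ k x MAd hx j).
  apply: Rle_trans (iter_mono n.+1 MBp wpos (iter_monoM k MAp MAB hx) i) _.
  rewrite -iterD /W (stab_all MBp MB1 MBd hx); exact: Rle_refl.
have Winv : forall i, W (sh n t0 i) = W i.
  move=> i; rewrite !Wd -itsh.
  have -> : (fun j => w (sh n t0 j)) = w by apply: functional_extensionality => j; exact: winv.
  by [].
exists n.+1; split; first by rewrite pow_iter //; exact: iter_nonneg.
move=> i; rewrite pow_iter //.
have -> : mp_app B (iter n.+1 (mp_app B) x) i = iter n.+2 (mp_app B) x i by [].
rewrite !itB.
have -> : iter n.+2 (mp_app MB) x = W.
  apply: functional_extensionality => j.
  by have := stab_all MBp MB1 MBd hx 1 j; rewrite addn1.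
rewrite mulSnr -sh_comp Winv -/W.
change (lam ^ n.+2) with (lam * (lam * lam ^ n)); change (lam ^ n.+1) with (lam * lam ^ n); ring.
Qed.
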